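(* $D(19,\{3,4\})\ge 34$; equivalently, every $\{K_3,K_4\}$-decomposition of $K_{19}$ has $\alpha\ge 11$.
   Context: A $\{K_3,K_4\}$-decomposition of $K_v$ is a collection of subgraphs, each isomorphic to $K_3$ or $K_4$, such that every edge of $K_v$ lies in exactly one of them. $\alpha$ and $\beta$ denote the numbers of copies of $K_3$ and $K_4$ in the decomposition (so $3\alpha+6\beta=\binom{v}{2}$). $D(v,\{3,4\})$ is the minimum of $\alpha+\beta$ over all such decompositions of $K_v$. *)

(* Defs.v *)
From mathcomp Require Import all_boot.
Set Implicit Arguments. Unset Strict Implicit. Unset Printing Implicit Defensive.

(* A {K3,K4}-decomposition is
   represented by the set B of vertex sets of its blocks: each block is a
   set of 3 or 4 vertices (the copy of K_3 / K_4 on those vertices), and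
   every edge {x,y} (x <> y) of K_v lies in exactly one block. *)
Definition K34_decomposition (v : nat) (B : {set {set 'I_v}}) : Prop :=
  (forall b, b \in B -> #|b| = 3 \/ #|b| = 4) /\
  (forall x y : 'I_v, x != y ->
     #|[set b in B | (x \in b) && (y \in b)]| = 1).

Definition num_K3 (v : nat) (B : {set {set 'I_v}}) : nat :=
  #|[set b in B | #|b| == 3]|.
Definition num_K4 (v : nat) (B : {set {set 'I_v}}) : nat :=
  #|[set b in B | #|b| == 4]|.

(* Main.v *)
Require Import Defs.
From mathcomp Require Import all_boot zify.


Section Gen.
Variables (v : nat) (B : {set {set 'I_v}}).
Hypothesis hB : forall x y : 'I_v, x != y ->
  #|[set b in B | (x \in b) && (y \in b)]| = 1.

Lemma L2 (S : {set 'I_v}) z : z \in S ->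
  \sum_(b in B | z \in b) #|(b :&: S) :\ z| = #|S| - 1.
Proof.
move=> zS.
have -> : #|S| - 1 = #|S :\ z| by rewrite (cardsD1 z S) zS add1n subn1.
transitivity (\sum_(b in B | z \in b) \sum_(y in S :\ z) (y \in b : nat)).
  apply: eq_bigr => b _; rewrite -sum1_card big_mkcond /= [RHS]big_mkcond /=.
  apply: eq_bigr => y _; rewrite !inE; by case: (y == z); case: (y \in b); case: (y \in S).
rewrite exchange_big /= -sum1_card; apply: eq_bigr => y; rewrite !inE => /andP[yz _].
have zy : z != y by rewrite eq_sym.
have := hB z y zy; rewrite -sum1_card => <-.
rewrite big_mkcond [RHS]big_mkcond /=; apply: eq_bigr => b _; rewrite !inE.
by case: (b \in B); case: (z \in b); case: (y \in b).
Qed.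

Lemma L1 (S : {set 'I_v}) :
  \sum_(b in B) #|b :&: S| * (#|b :&: S| - 1) = #|S| * (#|S| - 1).
Proof.
transitivity (\sum_(b in B) \sum_(x in S) ((x \in b) * #|(b :&: S) :\ x|)).
  apply: eq_bigr => b _.
  rewrite -[in LHS]sum1_card big_distrl /= [RHS]big_mkcond /= [LHS]big_mkcond /=.
  apply: eq_bigr => x _; rewrite !inE.
  case xb: (x \in b); case xS: (x \in S) => //=.
  by rewrite sum1_card (cardsD1 x (b :&: S)) !inE xb xS add1n subn1.
rewrite exchange_big /= -[in RHS]sum1_card big_distrl /=.
apply: eq_bigr => x xS; rewrite sum1_card mul1n -(@L2 S x xS) [RHS]big_mkcondr /=.
by apply: eq_bigr => b _; case: (x \in b); rewrite ?mul1n ?mul0n.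
Qed.
End Gen.

Lemma sum_const_c (T : finType) (P : pred T) c :
  \sum_(i | P i) c = c * \sum_(i | P i) 1.
Proof. by rewrite big_distrr /=; apply: eq_bigr => i _; rewrite muln1. Qed.

Section Main.
Variable B : {set {set 'I_19}}.
Hypothesis hsz : forall b, b \in B -> #|b| = 3 \/ #|b| = 4.
Hypothesis hB : forall x y : 'I_19, x != y ->
  #|[set b in B | (x \in b) && (y \in b)]| = 1.

Lemma splitB (P : pred {set 'I_19}) (g : {set 'I_19} -> nat) :
  \sum_(b in B | P b) g b = \sum_(b in B | P b && (#|b| == 3)) g b
                          + \sum_(b in B | P b && (#|b| == 4)) g b.
Proof.
rewrite (@bigID _ _ _ _ _ (fun b : {set 'I_19} => #|b| == 3)) /=; congr (_ + _).
  by apply: eq_bigl => b; rewrite andbA.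
apply: eq_bigl => b; case bB: (b \in B) => //=.
by case: (hsz b bB) => ->; rewrite ?andbF ?andbT.
Qed.

Lemma splitB0 (g : {set 'I_19} -> nat) :
  \sum_(b in B) g b = \sum_(b in B | #|b| == 3) g b
                          + \sum_(b in B | #|b| == 4) g b.
Proof. rewrite -(splitB xpredT); apply: eq_bigl => b; by rewrite andbT. Qed.

Lemma exch (S : {set 'I_19}) (P : pred {set 'I_19}) :
  \sum_(b in B | P b) #|b :&: S| = \sum_(y in S) \sum_(b in B | (y \in b) && P b) 1.
Proof.
transitivity (\sum_(b in B | P b) \sum_(y in S) (y \in b : nat)).
  apply: eq_bigr => b _; rewrite -sum1_card [RHS]big_mkcond /= [LHS]big_mkcond /=.
  by apply: eq_bigr => y _; rewrite !inE; case: (y \in b); case: (y \in S).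
rewrite exchange_big /=; apply: eq_bigr => y _.
rewrite big_mkcond [RHS]big_mkcond /=; apply: eq_bigr => b _.
by case: (b \in B); case: (P b); case: (y \in b).
Qed.

Lemma main_alpha : 11 <= num_K3 B /\ num_K3 B + 2 * num_K4 B = 57.
Proof.
pose al := \sum_(b in B | #|b| == 3) 1.
pose be := \sum_(b in B | #|b| == 4) 1.
have eal : num_K3 B = al by rewrite /num_K3 -sum1_card; apply: eq_bigl => b; rewrite inE.
have ebe : num_K4 B = be by rewrite /num_K4 -sum1_card; apply: eq_bigl => b; rewrite inE.
rewrite eal ebe.
have h1 : 6 * al + 12 * be = 342.
  have := @L1 19 B hB [set: 'I_19]; rewrite cardsT card_ord /=.
  under eq_bigr => b _ do rewrite setIT.
  rewrite splitB0.
  under eq_bigr => b /andP[_ /eqP ->] do [].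
  under [X in _ + X = _]eq_bigr => b /andP[_ /eqP ->] do [].
  rewrite (sum_const_c _ _ (3 * _)) (sum_const_c _ _ (4 * _)) /al /be; lia.
have cD1 : forall (b : {set 'I_19}) z, z \in b -> #|b :\ z| = #|b| - 1.
  by move=> b z zb; rewrite (cardsD1 z b) zb add1n subn1.
pose N := [set y : 'I_19 | [exists b in B, (#|b| == 3) && (y \in b)]].
pose t y := \sum_(b in B | (y \in b) && (#|b| == 3)) 1.
pose f y := \sum_(b in B | (y \in b) && (#|b| == 4)) 1.
have h2 : forall z, 2 * t z + 3 * f z = 18.
  move=> z; have := @L2 19 B hB setT z (in_setT z); rewrite cardsT card_ord.
  rewrite (splitB (fun b => z \in b)).
  under eq_bigr => b /andP[_ /andP[zb hb]] do rewrite setIT (cD1 _ _ zb) (eqP hb).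
  under [X in _ + X = _]eq_bigr => b /andP[_ /andP[zb hb]] do rewrite setIT (cD1 _ _ zb) (eqP hb).
  rewrite (sum_const_c _ _ (3 - 1)) (sum_const_c _ _ (4 - 1)) /t /f.
  have e1 : forall c, \sum_(b in B | (z \in b) && (#|b| == c)) 1 = \sum_(i in B | (z \in i) && (#|i| == c)) 1 by [].
  lia.
have tri_sub : forall b, b \in B -> #|b| == 3 -> b :&: N = b.
  move=> b bB hb; apply/setIidPl/subsetP => y yb; rewrite inE.
  by apply/existsP; exists b; rewrite bB hb yb.
pose m := #|N|.
pose K1 := \sum_(b in B | #|b| == 4) #|b :&: N|.
pose K2 := \sum_(b in B | #|b| == 4) #|b :&: N| * (#|b :&: N| - 1).
have h3 : 6 * al + K2 = m * (m - 1).
  have := @L1 19 B hB N; rewrite splitB0.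
  under eq_bigr => b /andP[bB hb] do rewrite (tri_sub b bB hb) (eqP hb).
  by rewrite (sum_const_c _ _ (3 * _)) => <-.
have h4 : K1 = \sum_(y in N) f y by rewrite /K1 exch.
have h5 : 3 * al = \sum_(y in N) t y.
  rewrite /t -exch /al big_distrr /=.
  by apply: eq_bigr => b /andP[bB hb]; rewrite (tri_sub b bB hb) (eqP hb).
have h6 : forall y, y \in N -> 1 <= t y.
  move=> y; rewrite inE => /existsP[b /and3P[bB hb yb]].
  by rewrite /t (bigD1 b) //= ?bB ?hb ?yb.
have h7 : forall y, y \in N -> 2 * t y <= m - 1.
  move=> y yN; rewrite -(@L2 19 B hB N y yN) (splitB (fun b => y \in b)).
  apply: leq_trans (leq_addr _ _).
  rewrite /t big_distrr /=; apply: eq_leq; apply: eq_bigr => b /andP[bB /andP[yb hb]].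
  by rewrite (tri_sub b bB hb) (cD1 _ _ yb) (eqP hb).
have h8 : 2 * K1 <= 2 * be + K2.
  rewrite /K1 /K2 /be !big_distrr /= -big_split /=; apply: leq_sum => b _.
  case: #|b :&: N| => [|[|[|k]]] //=; nia.
have h9 : 2 * \sum_(y in N) t y + 3 * \sum_(y in N) f y = 18 * m.
  rewrite !big_distrr -big_split /= /m -sum1_card big_distrr /=.
  by apply: eq_bigr => y _; rewrite h2 muln1.
have h10 : 3 * m <= \sum_(y in N) t y.
  rewrite /m -sum1_card big_distrr /=; apply: leq_sum => y yN.
  have := h6 y yN; have := h2 y; lia.
have hal : 0 < al by lia.
have [y0 y0N] : exists y, y \in N.
  case: (pickP [pred b | (b \in B) && (#|b| == 3)]) => [b /andP[bB hb] | none].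
    have : 0 < #|b| by rewrite (eqP hb).
    rewrite card_gt0 => /set0Pn[y yb]; exists y; rewrite inE.
    by apply/existsP; exists b; rewrite bB hb yb.
  have : al = 0 by rewrite /al big_pred0 // => b; exact: none b.
  lia.
have h11 := h7 y0 y0N.
have h12 := h6 y0 y0N.
have h13 := h2 y0.
clear eal ebe.
have mge : 7 <= m by lia.
split; last by lia.
rewrite ltnNge; apply/negP => Ha.
have : m <= 10 by lia.
have : m = 7 \/ m = 8 \/ m = 9 \/ m = 10 by lia.
case=> [e|[e|[e|e]]]; rewrite e in h3; lia.
Qed.
End Main.

Theorem mainTheorem20 (B : {set {set 'I_19}}) :
  K34_decomposition B ->
  34 <= num_K3 B + num_K4 B /\ 11 <= num_K3 B.
Proof.
move=> [hsz hB].
have [h1 h2] := @main_alpha B hsz hB.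
split; last exact: h1.
lia.
Qed.
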